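(* For every formula $\phi$: $\vdash\phi$ if and only if $\phi$ is valid (true at every state of every LIiP-model).
   Context: Syntax and proof system. Fix a finite set $\mathcal{A}$ of agent names containing a distinguished name $\mathsf{CM}$ (the communication medium). Messages are the terms generated by $M ::= a \mid B \mid (M,M)$, where $a\in\mathcal{A}$, $B$ ranges over an optional (possibly empty) set of further application-specific data constants, and $(M,M')$ is a pair. Let $\mathcal{P}$ be a denumerable set of propositional variables containing, for every $a\in\mathcal{A}$ and every message $M$, a distinguished atom $\mathsf{k}_a(M)$ (''$a$ knows $M$''). Formulas: $\phi ::= P \mid \phi\wedge\phi \mid \phi\vee\phi \mid \neg\phi \mid \phi\to\phi \mid [M]\phi$ ($P\in\mathcal{P}$, $M$ a message; $[M]\phi$ reads ''$M$ can intuitionistically prove $\phi$ to $\mathsf{CM}$''). Abbreviations: $\mathrm{true}:=\mathsf{k}_{\mathsf{CM}}(\mathsf{CM})$, $\mathrm{false}:=\neg\mathrm{true}$, $\phi\leftrightarrow\psi:=(\phi\to\psi)\wedge(\psi\to\phi)$, $\langle M\rangle\phi:=\neg\neg(\mathsf{k}_{\mathsf{CM}}(M)\wedge\phi)$. LIiP is the smallest set of formulas that contains all instances (arbitrary $a$, $M,M'$, $\phi,\psi$) of: the axioms of an adequate Hilbert axiomatization of intuitionistic propositional logic; $\mathsf{k}_a(a)$; $(\mathsf{k}_a(M)\wedge\mathsf{k}_a(M'))\leftrightarrow\mathsf{k}_a((M,M'))$; $[M]\mathsf{k}_{\mathsf{CM}}(M)$; $[M](\phi\to\psi)\to([M]\phi\to[M]\psi)$;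 $[M]\phi\to(\mathsf{k}_{\mathsf{CM}}(M)\to\phi)$; $[M]\phi\to\langle M\rangle\phi$; $\phi\to[M]\phi$; and is closed under modus ponens and the rule: if $\mathsf{k}_{\mathsf{CM}}(M)\to\mathsf{k}_{\mathsf{CM}}(M')$ is in the set then so is $[M']\phi\to[M]\phi$ for every $\phi$. Write $\vdash\phi$ for $\phi\in\mathrm{LIiP}$. Semantics. An LIiP-model is $(\mathcal{S},\sqsubseteq,\{R_M\}_M,\{D_a\}_{a\in\mathcal{A}},\mathcal{V})$ where $\mathcal{S}$ is a nonempty set of states, $\sqsubseteq$ a partial order on $\mathcal{S}$, $D_a(s)$ a set of messages for each agent $a$ and state $s$, and $\mathrm{cl}_a(s)$ denotes the smallest set of messages containing $a$ and $D_a(s)$ that is closed under forming pairs of its elements and under taking both components of pairs in it. $\mathcal{V}:\mathcal{P}\to 2^{\mathcal{S}}$ satisfies $\mathcal{V}(\mathsf{k}_a(M))=\{s: M\in\mathrm{cl}_a(s)\}$ and is upward closed: $s\in\mathcal{V}(P)$ and $s\sqsubseteq s'$ imply $s'\in\mathcal{V}(P)$. Write $M\preceq M'$ iff for all $s\in\mathcal{S}$, $M\in\mathrm{cl}_{\mathsf{CM}}(s)$ implies $M'\in\mathrm{cl}_{\mathsf{CM}}(s)$. The relations $R_M\subseteq\mathcal{S}\times\mathcal{S}$ satisfy: (i) $sR_Ms'$ implies $M\in\mathrm{cl}_{\mathsf{CM}}(s')$; (ii) $M\in\mathrm{cl}_{\mathsf{CM}}(s)$ implies $sR_Ms$; (iii)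 for every $s$ there is $s'$ with $sR_Ms'$; (iv) $R_M\subseteq R_{\mathsf{CM}}={\sqsubseteq}$; (v) if $sR_{\mathsf{CM}}t$ and $tR_Mu$ then $sR_Mu$; (vi) $M\preceq M'$ implies $R_M\subseteq R_{M'}$. Satisfaction: $s\models P$ iff $s\in\mathcal{V}(P)$; $\wedge,\vee$ are evaluated classically at $s$; $s\models\neg\phi$ iff no $s'\sqsupseteq s$ satisfies $\phi$; $s\models\phi\to\psi$ iff every $s'\sqsupseteq s$ satisfying $\phi$ satisfies $\psi$; $s\models[M]\phi$ iff every $s'$ with $sR_Ms'$ satisfies $\phi$. A formula is valid iff it is true at every state of every LIiP-model. *)

(* Defs.v *)
From mathcomp Require Import all_boot.
Set Implicit Arguments.
Unset Strict Implicit.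
Unset Printing Implicit Defensive.

Section LIiP.
(* A : finite set of agent names, CM : the communication medium,
   B : (possibly empty) set of application-specific data constants,
   V : the further propositional variables (besides the k_a(M) atoms). *)
Variables (A : finType) (CM : A) (B : countType) (V : countType).

Inductive msg : Type :=
| Ag : A -> msg
| Dat : B -> msg
| Pair : msg -> msg -> msg.

Inductive atom : Type :=
| K : A -> msg -> atom
| PV : V -> atom.

Inductive form : Type :=
| FAtom : atom -> form
| FAnd : form -> form -> form
| FOr : form -> form -> form
| FNeg : form -> form
| FImp : form -> form -> form
| FBox : msg -> form -> form.

Definition kf (a : A) (M : msg) : form := FAtom (K a M).
Definition ftrue : form := kf CM (Ag CM).
Definition ffalse : form := FNeg ftrue.
Definition fiff (p q : form) : form := FAnd (FImp p q) (FImp q p).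
Definition fdia (M : msg) (p : form) : form :=
  FNeg (FNeg (FAnd (kf CM M) p)).

(* The Hilbert system LIiP; intuitionistic propositional part given by
   Kleene's standard axiomatization of IPC in ->, /\, \/, ~. *)
Inductive Prov : form -> Prop :=
| ax_K (p q : form) : Prov (FImp p (FImp q p))
| ax_S (p q r : form) :
    Prov (FImp (FImp p q) (FImp (FImp p (FImp q r)) (FImp p r)))
| ax_andI (p q : form) : Prov (FImp p (FImp q (FAnd p q)))
| ax_andE1 (p q : form) : Prov (FImp (FAnd p q) p)
| ax_andE2 (p q : form) : Prov (FImp (FAnd p q) q)
| ax_orI1 (p q : form) : Prov (FImp p (FOr p q))
| ax_orI2 (p q : form) : Prov (FImp q (FOr p q))
| ax_orE (p q r : form) :
    Prov (FImp (FImp p r) (FImp (FImp q r) (FImp (FOr p q) r)))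
| ax_negI (p q : form) :
    Prov (FImp (FImp p q) (FImp (FImp p (FNeg q)) (FNeg p)))
| ax_negE (p q : form) : Prov (FImp (FNeg p) (FImp p q))
| ax_self (a : A) : Prov (kf a (Ag a))
| ax_pair (a : A) (M M' : msg) :
    Prov (fiff (FAnd (kf a M) (kf a M')) (kf a (Pair M M')))
| ax_boxk (M : msg) : Prov (FBox M (kf CM M))
| ax_boxK (M : msg) (p q : form) :
    Prov (FImp (FBox M (FImp p q)) (FImp (FBox M p) (FBox M q)))
| ax_boxT (M : msg) (p : form) :
    Prov (FImp (FBox M p) (FImp (kf CM M) p))
| ax_boxdia (M : msg) (p : form) : Prov (FImp (FBox M p) (fdia M p))
| ax_boxI (M : msg) (p : form) : Prov (FImp p (FBox M p))
| r_mp (p q : form) : Prov (FImp p q) -> Prov p -> Prov q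
| r_mono (M M' : msg) (p : form) :
    Prov (FImp (kf CM M) (kf CM M')) -> Prov (FImp (FBox M' p) (FBox M p)).

Inductive cl (a : A) (D : msg -> Prop) : msg -> Prop :=
| cl_self : cl a D (Ag a)
| cl_D (M : msg) : D M -> cl a D M
| cl_pair (M M' : msg) : cl a D M -> cl a D M' -> cl a D (Pair M M')
| cl_fst (M M' : msg) : cl a D (Pair M M') -> cl a D M
| cl_snd (M M' : msg) : cl a D (Pair M M') -> cl a D M'.

Record model : Type := Model {
  st : Type;
  st_nonempty : inhabited st;
  le : st -> st -> Prop;
  le_refl : forall s, le s s;
  le_trans : forall s t u, le s t -> le t u -> le s u;
  le_antisym : forall s t, le s t -> le t s -> s = t;
  R : msg -> st -> st -> Prop;
  D : A -> st -> msg -> Prop;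
  val : atom -> st -> Prop;
  val_k : forall a M s, val (K a M) s <-> cl a (D a s) M;
  val_up : forall P s s', val P s -> le s s' -> val P s';
  R_i : forall M s s', R M s s' -> cl CM (D CM s') M;
  R_ii : forall M s, cl CM (D CM s) M -> R M s s;
  R_iii : forall M s, exists s', R M s s';
  R_iv_sub : forall M s s', R M s s' -> R (Ag CM) s s';
  R_iv_eq : forall s s', R (Ag CM) s s' <-> le s s';
  R_v : forall M s t u, R (Ag CM) s t -> R M t u -> R M s u;
  R_vi : forall M M',
    (forall s, cl CM (D CM s) M -> cl CM (D CM s) M') ->
    forall s s', R M s s' -> R M' s s'
}.

Fixpoint sat (m : model) (s : st m) (p : form) : Prop :=
  match p with
  | FAtom P => @val m P s
  | FAnd p q => sat s p /\ sat s q
  | FOr p q => sat s p \/ sat s q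
  | FNeg p => forall s', @le m s s' -> ~ sat s' p
  | FImp p q => forall s', @le m s s' -> sat s' p -> sat s' q
  | FBox M p => forall s', @R m M s s' -> sat s' p
  end.

Definition valid (p : form) : Prop := forall (m : model) (s : st m), sat s p.

End LIiP.

(* Main.v *)
Require Import Defs.
From mathcomp Require Import all_boot.
From mathcomp Require Import classical_sets.
From Stdlib Require Import Classical ProofIrrelevance FunctionalExtensionality PropExtensionality.

Section Sound.
Variables (A : finType) (CM : A) (B V : countType).

Lemma persist (m : model CM B V) (s s' : st m) (p : form A B V) :
  sat s p -> Defs.le s s' -> sat s' p.
Proof.
revert s s'; induction p as [a|p IHp q IHq|p IHp q IHq|p IHp|p IHp q IHq|M p IHp];
  intros s s' H Hle; simpl in *.
- eapply val_up; eauto.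
- destruct H; split; eauto.
- destruct H; [left|right]; eauto.
- intros u Hu; apply H; eapply le_trans; eauto.
- intros u Hu; apply H; eapply le_trans; eauto.
- intros u Hu; apply H; eapply R_v; [apply R_iv_eq; exact Hle| exact Hu].
Qed.

Lemma sound (p : form A B V) : Prov CM p -> valid CM p.
Proof.
unfold valid; induction 1; intros m s; unfold fiff, fdia, kf, ftrue, ffalse in *; simpl.
- intros s1 H1 Hp s2 H2 Hq; eapply persist; eauto.
- intros s1 _ H1 s2 H12 H2 s3 H23 Hp.
  apply (H2 s3 H23 Hp s3 (le_refl _)). apply (H1 s3 (le_trans H12 H23) Hp).
- intros s1 _ Hp s2 H12 Hq; split; [eapply persist; eauto | exact Hq].
- intros s1 _ [H1 H2]; exact H1.
- intros s1 _ [H1 H2]; exact H2.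
- intros s1 _ H1; left; exact H1.
- intros s1 _ H1; right; exact H1.
- intros s1 _ H1 s2 H12 H2 s3 H23 [Hp|Hq].
  + apply (H1 s3 (le_trans H12 H23) Hp).
  + apply (H2 s3 H23 Hq).
- intros s1 _ H1 s2 H12 H2 s3 H23 Hp.
  apply (H2 s3 H23 Hp s3 (le_refl _)). apply (H1 s3 (le_trans H12 H23) Hp).
- intros s1 _ Hn s2 H12 Hp. exfalso; exact (Hn s2 H12 Hp).
- apply val_k; apply cl_self.
- split.
  + intros s1 _ [H1 H2]; apply val_k; apply val_k in H1; apply val_k in H2; apply cl_pair; auto.
  + intros s1 _ H1; apply val_k in H1; split; apply val_k; [eapply cl_fst|eapply cl_snd]; eauto.
- intros s' HR; apply val_k; eapply R_i; eauto.
- intros s1 _ H1 s2 H12 H2 u Hu.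
  assert (HR : Defs.R M s1 u) by (eapply R_v; [apply R_iv_eq; exact H12 | exact Hu]).
  apply (H1 u HR u (le_refl _)). apply H2; exact Hu.
- intros s1 _ H1 s2 H12 Hk. apply H1.
  eapply R_v; [apply R_iv_eq; exact H12 | apply R_ii; apply val_k; exact Hk].
- intros s1 _ H1 s2 H12 Hn.
  destruct (R_iii M s2) as [u Hu].
  apply (Hn u (proj1 (R_iv_eq _ _) (R_iv_sub Hu))). split.
  + apply val_k; eapply R_i; eauto.
  + apply H1; eapply R_v; [apply R_iv_eq; exact H12 | exact Hu].
- intros s1 _ H1 u Hu. eapply persist; eauto. apply R_iv_eq; eapply R_iv_sub; eauto.
- exact (IHProv1 m s s (le_refl _) (IHProv2 m s)).
- intros s1 _ H1 u Hu. apply H1. eapply R_vi; [|exact Hu].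
  intros t Ht. apply val_k. apply (IHProv m t t (le_refl t)). apply val_k; exact Ht.
Qed.

End Sound.

Set Implicit Arguments.
Section Compl.
Variables (A : finType) (CM : A) (B V : countType).
Local Notation F := (form A B V).
Local Notation Pr := (@Prov A CM B V).

Definition add (G : F -> Prop) (q : F) : F -> Prop := fun x => G x \/ x = q.

Inductive Der (G : F -> Prop) : F -> Prop :=
| d_ax p : Pr p -> Der G p
| d_hyp p : G p -> Der G p
| d_mp p q : Der G (FImp p q) -> Der G p -> Der G q.

Lemma pr_id p : Pr (FImp p p).
Proof.
eapply r_mp; [eapply r_mp; [apply (ax_S CM p (FImp p p) p) | apply ax_K] | apply ax_K].
Qed.

Lemma pr_mp p q : Pr (FImp p q) -> Pr p -> Pr q.
Proof. intros; eapply r_mp; eauto. Qed.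

Lemma Der_mono (G H : F -> Prop) p : (forall x, G x -> H x) -> Der G p -> Der H p.
Proof. intros HGH; induction 1; [apply d_ax|apply d_hyp|eapply d_mp]; eauto. Qed.

Lemma Der_pr G p q : Pr (FImp p q) -> Der G p -> Der G q.
Proof. intros; eapply d_mp; [apply d_ax|]; eauto. Qed.

Lemma Der_pr2 G p q r : Pr (FImp p (FImp q r)) -> Der G p -> Der G q -> Der G r.
Proof. intros; eapply d_mp; [eapply Der_pr|]; eauto. Qed.

Lemma deduct G q p : Der (add G q) p -> Der G (FImp q p).
Proof.
induction 1 as [p Hp|p Hp|p r _ IH1 _ IH2].
- eapply Der_pr; [apply ax_K| apply d_ax; exact Hp].
- destruct Hp as [Hp| ->].
  + eapply Der_pr; [apply ax_K| apply d_hyp; exact Hp].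
  + apply d_ax, pr_id.
- eapply Der_pr2; [apply (ax_S CM q p r)| exact IH2 | exact IH1].
Qed.

Lemma Der_empty p : Der (fun _ => False) p -> Pr p.
Proof. induction 1; [auto|contradiction|eapply r_mp; eauto]. Qed.

Lemma cut G q p : Der G q -> Der (add G q) p -> Der G p.
Proof. intros Hq Hp; eapply d_mp; [apply deduct; exact Hp| exact Hq]. Qed.

Record prime (t : F -> Prop) : Prop := {
  pr_cl : forall p, Der t p -> t p;
  pr_or : forall p q, t (FOr p q) -> t p \/ t q;
  pr_cons : exists p, ~ t p }.

Lemma chain_der (G : F -> Prop) (Fm : set (set F)) th :
  total_on Fm subset ->
  Der (fun x => G x \/ bigcup Fm (fun X => X) x) th ->
  Der G th \/ exists X, Fm X /\ Der (fun x => G x \/ X x) th.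
Proof.
intros Htot; induction 1 as [p Hp|p Hp|p q _ IH1 _ IH2].
- left; apply d_ax; exact Hp.
- destruct Hp as [Hp|[X HX Hp]].
  + left; apply d_hyp; exact Hp.
  + right; exists X; split; [exact HX| apply d_hyp; right; exact Hp].
- destruct IH1 as [IH1|[X [HX IH1]]]; destruct IH2 as [IH2|[Y [HY IH2]]].
  + left; eapply d_mp; eauto.
  + right; exists Y; split; [exact HY|]. eapply d_mp; [|exact IH2].
    eapply Der_mono; [|exact IH1]; intros x Hx; left; exact Hx.
  + right; exists X; split; [exact HX|]. eapply d_mp; [exact IH1|].
    eapply Der_mono; [|exact IH2]; intros x Hx; left; exact Hx.
  + destruct (Htot X Y HX HY) as [HXY|HYX].
    * right; exists Y; split; [exact HY|]. eapply d_mp; [|exact IH2].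
      eapply Der_mono; [|exact IH1]; intros x [Hx|Hx]; [left|right; apply HXY]; auto.
    * right; exists X; split; [exact HX|]. eapply d_mp; [exact IH1|].
      eapply Der_mono; [|exact IH2]; intros x [Hx|Hx]; [left|right; apply HYX]; auto.
Qed.

Lemma lind (G : F -> Prop) phi : ~ Der G phi ->
  exists t, prime t /\ (forall x, G x -> t x) /\ ~ t phi.
Proof.
intros HG.
pose P := fun X : set F => ~ Der (fun x => G x \/ X x) phi.
destruct (@Zorn_bigcup F P) as [A0 [HA0 Hmax]].
{ intros Fm HF Htot Hd. destruct (@chain_der G Fm phi Htot Hd) as [H|[X [HX H]]].
  - exact (HG H).
  - exact (HF X HX H). }
pose t := fun x => G x \/ A0 x.
assert (Hext : forall psi, ~ t psi -> Der (add t psi) phi).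
{ intros psi Hpsi.
  assert (Hpr : proper A0 (fun x => A0 x \/ x = psi)).
  { split.
    - intros x Hx; left; exact Hx.
    - intros Hsub. apply Hpsi. right. exact (Hsub psi (or_intror (erefl psi))). }
  apply NNPP; intros Hn. apply (Hmax _ Hpr). intros Hd. apply Hn.
  eapply Der_mono; [|exact Hd]. intros x [Hx|[Hx|Hx]]; unfold add, t; tauto. }
assert (Hcl : forall p, Der t p -> t p).
{ intros p Hp. apply NNPP; intros Hn. apply HA0. eapply cut; [exact Hp| exact (Hext p Hn)]. }
exists t; split; [split|split].
- exact Hcl.
- intros p q Hpq. apply NNPP; intros Hn.
  apply HA0.
  assert (H1 : Der t (FImp p phi)) by (apply deduct, Hext; tauto).
  assert (H2 : Der t (FImp q phi)) by (apply deduct, Hext; tauto).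
  eapply d_mp; [eapply Der_pr2; [apply (ax_orE CM p q phi)| exact H1 | exact H2] | apply d_hyp; exact Hpq].
- exists phi; intros Ht. apply HA0. apply d_hyp. exact Ht.
- intros x Hx; left; exact Hx.
- intros Ht. apply HA0. apply d_hyp. exact Ht.
Qed.


Section Th.
Variable t : F -> Prop.
Hypothesis Ht : prime t.

Lemma th_pr p : Pr p -> t p.
Proof. intros; apply (pr_cl Ht); apply d_ax; auto. Qed.
Lemma th_mp p q : t (FImp p q) -> t p -> t q.
Proof. intros; apply (pr_cl Ht); eapply d_mp; apply d_hyp; eauto. Qed.
Lemma th_pr1 p q : Pr (FImp p q) -> t p -> t q.
Proof. intros; eapply th_mp; [apply th_pr|]; eauto. Qed.
Lemma th_pr2 p q r : Pr (FImp p (FImp q r)) -> t p -> t q -> t r.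
Proof. intros; eapply th_mp; [eapply th_pr1|]; eauto. Qed.
Lemma th_incons p : t (FNeg p) -> t p -> False.
Proof.
intros H1 H2. destruct (pr_cons Ht) as [q Hq]. apply Hq.
eapply th_pr2; [apply (ax_negE CM p q)| exact H1| exact H2].
Qed.
Lemma th_and p q : t p -> t q -> t (FAnd p q).
Proof. intros; eapply th_pr2; [apply ax_andI| |]; eauto. Qed.

Lemma th_atom a M : t (kf V a M) <-> cl a (fun M => t (kf V a M)) M.
Proof.
split; [intros; apply cl_D; auto|].
induction 1 as [|M HM|M M' _ IH1 _ IH2|M M' _ IH|M M' _ IH].
- apply th_pr, ax_self.
- exact HM.
- eapply th_pr1; [|apply th_and; [exact IH1|exact IH2]].
  eapply pr_mp; [apply ax_andE1|apply (ax_pair CM V a M M')].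
- assert (H : t (FAnd (kf V a M) (kf V a M'))).
  { eapply th_pr1; [|exact IH]. eapply pr_mp; [apply ax_andE2|apply (ax_pair CM V a M M')]. }
  eapply th_pr1; [apply ax_andE1|exact H].
- assert (H : t (FAnd (kf V a M) (kf V a M'))).
  { eapply th_pr1; [|exact IH]. eapply pr_mp; [apply ax_andE2|apply (ax_pair CM V a M M')]. }
  eapply th_pr1; [apply ax_andE2|exact H].
Qed.

Lemma th_boxapp M p q : t (FBox M (FImp p q)) -> t (FBox M p) -> t (FBox M q).
Proof. intros; eapply th_pr2; [apply ax_boxK| |]; eauto. Qed.
End Th.

Lemma pr_nec M p : Pr p -> Pr (FBox M p).
Proof. intros; eapply pr_mp; [apply ax_boxI|auto]. Qed.

Definition PT := {t : F -> Prop | prime t}.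
Definition cle (s t : PT) := forall p, proj1_sig s p -> proj1_sig t p.
Definition cR (M : msg A B) (s t : PT) :=
  cle s t /\ (forall p, proj1_sig s (FBox M p) -> proj1_sig t p) /\ proj1_sig t (kf V CM M).
Definition cD (a : A) (s : PT) (M : msg A B) := proj1_sig s (kf V a M).
Definition cval (P : atom A B V) (s : PT) := proj1_sig s (FAtom P).

Definition kk M : F := kf V CM M.

Definition Gam (s : PT) M : F -> Prop :=
  fun x => proj1_sig s x \/ proj1_sig s (FBox M x) \/ x = kk M.

Lemma boxlemma (s : PT) M th : Der (Gam s M) th -> proj1_sig s (FBox M (FImp (kk M) th)).
Proof.
destruct s as [s Hs]; simpl.
induction 1 as [p Hp|p Hp|p q _ IH1 _ IH2].
- apply (th_pr Hs). apply pr_nec. eapply pr_mp; [apply ax_K|exact Hp].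
- destruct Hp as [Hp|[Hp| ->]]; try simpl in Hp.
  + eapply (th_pr1 Hs); [apply ax_boxI|]. eapply (th_pr1 Hs); [apply ax_K|exact Hp].
  + eapply (th_boxapp Hs); [apply (th_pr Hs); apply pr_nec; apply ax_K|exact Hp].
  + apply (th_pr Hs). apply pr_nec. apply pr_id.
- eapply (th_boxapp Hs); [|exact IH1].
  eapply (th_boxapp Hs); [|exact IH2].
  apply (th_pr Hs); apply pr_nec; apply ax_S.
Qed.

Lemma boxlemma2 (s : PT) M th : Der (Gam s M) th -> proj1_sig s (FBox M th).
Proof.
intros H. apply boxlemma in H. destruct s as [s Hs]; simpl in *.
eapply (th_boxapp Hs); [exact H|]. apply (th_pr Hs). apply ax_boxk.
Qed.

Lemma mkPT (t : F -> Prop) (H : prime t) : PT.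
Proof. exact (exist _ t H). Defined.

Lemma cle_refl s : cle s s.
Proof. intros p H; exact H. Qed.
Lemma cle_trans s t u : cle s t -> cle t u -> cle s u.
Proof. intros H1 H2 p H; auto. Qed.
Lemma cle_antisym s t : cle s t -> cle t s -> s = t.
Proof.
destruct s as [s Hs], t as [t Ht]; unfold cle; simpl; intros H1 H2.
assert (E : s = t).
{ apply functional_extensionality; intros p; apply propositional_extensionality; split; auto. }
subst t. f_equal. apply proof_irrelevance.
Qed.

Lemma c_val_k a M s : cval (K V a M) s <-> cl a (cD a s) M.
Proof. destruct s as [s Hs]; unfold cval, cD; simpl. apply (th_atom Hs a M). Qed.

Lemma c_val_up P s s' : cval P s -> cle s s' -> cval P s'.
Proof. intros H1 H2; apply H2; exact H1. Qed.

Lemma c_R_i M s s' : cR M s s' -> cl CM (cD CM s') M.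
Proof. intros [_ [_ H]]; apply cl_D; exact H. Qed.

Lemma c_R_ii M s : cl CM (cD CM s) M -> cR M s s.
Proof.
intros H. apply (c_val_k CM M s) in H. unfold cval in H.
split; [apply cle_refl|split; [|exact H]].
destruct s as [s Hs]; simpl in *. intros p Hp.
eapply (th_pr2 Hs); [apply ax_boxT|exact Hp|exact H].
Qed.

Lemma boxCM_T (s : PT) p : proj1_sig s (FBox (Ag B CM) p) -> proj1_sig s p.
Proof.
destruct s as [s Hs]; simpl; intros Hp.
eapply (th_pr2 Hs); [apply ax_boxT|exact Hp|apply (th_pr Hs), ax_self].
Qed.

Lemma c_R_iv_eq s s' : cR (Ag B CM) s s' <-> cle s s'.
Proof.
split; [intros [H _]; exact H|].
intros H; split; [exact H|split].
- intros p Hp; apply H; apply boxCM_T; exact Hp.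
- destruct s' as [t Ht]; simpl; apply (th_pr Ht), ax_self.
Qed.

Lemma c_R_iv_sub M s s' : cR M s s' -> cR (Ag B CM) s s'.
Proof. intros [H _]; apply c_R_iv_eq; exact H. Qed.

Lemma c_R_v M s t u : cR (Ag B CM) s t -> cR M t u -> cR M s u.
Proof.
intros H1 [H2 [H3 H4]]. apply c_R_iv_eq in H1.
split; [eapply cle_trans; eauto|split; [|exact H4]].
intros p Hp; apply H3; apply H1; exact Hp.
Qed.

Lemma c_R_iii M s : exists s', cR M s s'.
Proof.
assert (HG : ~ Der (Gam s M) (FNeg (kk M))).
{ intros H. apply boxlemma2 in H. destruct s as [s Hs]; simpl in *.
  assert (H2 : s (fdia CM M (FNeg (kk M)))) by (eapply (th_pr1 Hs); [apply ax_boxdia|exact H]).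
  unfold fdia in H2.
  eapply (th_incons Hs); [exact H2|]. apply (th_pr Hs).
  eapply pr_mp; [eapply pr_mp; [apply (ax_negI CM _ (kk M))|apply ax_andE1]|apply ax_andE2]. }
destruct (lind HG) as [t [Ht [Hsub _]]].
exists (exist _ t Ht); split; [|split]; simpl.
- intros p Hp; apply Hsub; left; exact Hp.
- intros p Hp; apply Hsub; right; left; exact Hp.
- apply Hsub; right; right; reflexivity.
Qed.

Lemma c_R_vi M M' :
  (forall s, cl CM (cD CM s) M -> cl CM (cD CM s) M') ->
  forall s s', cR M s s' -> cR M' s s'.
Proof.
intros H.
assert (Hpr : Pr (FImp (kk M) (kk M'))).
{ apply NNPP; intros Hn.
  assert (Hd : ~ Der (add (fun _ => False) (kk M)) (kk M')).
  { intros Hd; apply Hn; apply Der_empty; apply deduct; exact Hd. }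
  destruct (lind Hd) as [t [Ht [Hsub Hnot]]].
  apply Hnot. pose (w := exist (fun t => prime t) t Ht).
  apply (c_val_k CM M' w). apply H. apply (c_val_k CM M w). apply Hsub; right; reflexivity. }
assert (Hm : forall p, Pr (FImp (FBox M' p) (FBox M p))) by (intros; apply r_mono; exact Hpr).
intros s s' [H1 [H2 H3]]. split; [exact H1|split].
- intros p Hp. apply H2. destruct s as [s Hs]; simpl in *. eapply (th_pr1 Hs); [apply Hm|exact Hp].
- apply (c_val_k CM M' s'). apply H. apply (c_val_k CM M s'). exact H3.
Qed.

Definition cmodel (w : PT) : model CM B V :=
  @Model A CM B V PT (inhabits w) cle cle_refl cle_trans cle_antisym cR cD cval
    c_val_k c_val_up c_R_i c_R_ii c_R_iii c_R_iv_sub c_R_iv_eq c_R_v c_R_vi.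

Lemma truth (w : PT) p : forall s : st (cmodel w), sat s p <-> proj1_sig s p.
Proof.
induction p as [a|p IHp q IHq|p IHp q IHq|p IHp|p IHp q IHq|M p IHp];
  intros s; simpl.
- reflexivity.
- rewrite IHp IHq. destruct s as [s Hs]; simpl. split.
  + intros [H1 H2]; apply (th_and Hs); auto.
  + intros H; split; [eapply (th_pr1 Hs); [apply ax_andE1|exact H]|eapply (th_pr1 Hs); [apply ax_andE2|exact H]].
- rewrite IHp IHq. destruct s as [s Hs]; simpl. split.
  + intros [H|H]; [eapply (th_pr1 Hs); [apply ax_orI1|exact H]|eapply (th_pr1 Hs); [apply ax_orI2|exact H]].
  + apply (pr_or Hs).
- split.
  + intros H. apply NNPP; intros Hn.
    assert (Hd : ~ Der (add (proj1_sig s) p) (FNeg p)).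
    { intros Hd. apply deduct in Hd. apply Hn. destruct s as [s Hs]; simpl in *.
      apply (pr_cl Hs). eapply Der_pr2; [apply (ax_negI CM p p)|apply d_ax, pr_id|exact Hd]. }
    destruct (lind Hd) as [t [Ht [Hsub _]]].
    apply (H (exist _ t Ht)).
    * intros x Hx; apply Hsub; left; exact Hx.
    * apply IHp. simpl. apply Hsub; right; reflexivity.
  + intros H s' Hle Hs'. apply IHp in Hs'. apply Hle in H.
    destruct s' as [t Ht]; simpl in *. eapply (th_incons Ht); eauto.
- split.
  + intros H. apply NNPP; intros Hn.
    assert (Hd : ~ Der (add (proj1_sig s) p) q).
    { intros Hd. apply deduct in Hd. apply Hn. destruct s as [s Hs]; simpl in *.
      apply (pr_cl Hs). exact Hd. }
    destruct (lind Hd) as [t [Ht [Hsub Hq]]].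
    apply Hq. apply (IHq (exist _ t Ht)). apply (H (exist _ t Ht)).
    * intros x Hx; apply Hsub; left; exact Hx.
    * apply IHp. simpl. apply Hsub; right; reflexivity.
  + intros H s' Hle Hs'. apply IHq. apply IHp in Hs'. apply Hle in H.
    destruct s' as [t Ht]; simpl in *. eapply (th_mp Ht); eauto.
- split.
  + intros H. apply NNPP; intros Hn.
    assert (Hd : ~ Der (Gam s M) p).
    { intros Hd; apply Hn; apply boxlemma2; exact Hd. }
    destruct (lind Hd) as [t [Ht [Hsub Hp]]].
    apply Hp. apply (IHp (exist _ t Ht)). apply H. split; [|split]; simpl.
    * intros x Hx; apply Hsub; left; exact Hx.
    * intros x Hx; apply Hsub; right; left; exact Hx.
    * apply Hsub; right; right; reflexivity.
  + intros H s' [_ [HR _]]. apply IHp. apply HR. exact H.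
Qed.

Lemma complete p : valid CM p -> Pr p.
Proof.
intros H. apply NNPP; intros Hn.
assert (Hd : ~ Der (fun _ => False) p) by (intros Hd; apply Hn; apply Der_empty; exact Hd).
destruct (lind Hd) as [t [Ht [_ Hp]]].
pose (w := exist (fun t => prime t) t Ht).
apply Hp. exact (proj1 (@truth w p w) (H (cmodel w) w)).
Qed.

End Compl.

Theorem theorem3 (A : finType) (CM : A) (B : countType) (V : countType)
  (phi : form A B V) :
  Prov CM phi <-> valid CM phi.
Proof. split; [apply sound|apply complete]. Qed.
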